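(* For all complex $x,y$ with $|xy|<1$, $$\sum_{n=0}^{\infty} n!\,R_n(y)\,x^n=e^{y}\int_0^{y}\frac{e^{-t}}{1-xt}\,dt=e^{y}\sum_{n=0}^{\infty}d_n(x)\frac{y^{n+1}}{(n+1)!},$$ where the integral is along the segment from $0$ to $y$.
   Context: For an integer $n\ge 0$ and complex $y$, $R_n(y)=e^y-1-\frac{y}{1!}-\frac{y^2}{2!}-\dots-\frac{y^n}{n!}=e^y-\sum_{k=0}^n\frac{y^k}{k!}$. The derangement polynomials are $d_n(x)=(-1)^n\sum_{k=0}^{n}\binom{n}{k}(-1)^k k!\,x^k=n!\sum_{j=0}^{n}\frac{(-1)^j}{j!}x^{n-j}$, $n\ge 0$. *)

(* Defs.v *)
From Stdlib Require Import Reals Arith Factorial.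
From Coquelicot Require Import Coquelicot.
Open Scope C_scope.

Definition cexp (z : C) : C :=
  (RtoC (exp (Re z))) * (cos (Im z), sin (Im z)).

Definition cfact (k : nat) : C := RtoC (INR (Factorial.fact k)).

Definition Rrem (n : nat) (y : C) : C :=
  cexp y - sum_n (fun k => Cpow y k / cfact k) n.

Definition derangement_poly (n : nat) (x : C) : C :=
  cfact n * sum_n (fun j => Cpow (RtoC (-1)) j / cfact j * Cpow x (n - j)) n.

(* integrand of \int_0^y e^{-t}/(1 - x t) dt along the segment t = s*y, s in [0,1] *)
Definition seg_integrand (x y : C) (s : R) : C :=
  y * cexp (- (RtoC s * y)) / (1 - x * (RtoC s * y)).

(* Main.v *)
Require Import Defs.
From Stdlib Require Import Reals Lra Lia Arith Factorial.
From Coquelicot Require Import Coquelicot.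
Open Scope C_scope.


Definition CD (f : R -> C) (s : R) (a : C) : Prop :=
  is_derive (fun t => Re (f t)) s (Re a) /\ is_derive (fun t => Im (f t)) s (Im a).

Lemma CD_ext f g s a : (forall t, f t = g t) -> CD f s a -> CD g s a.
Proof.
intros E [H1 H2]; split; eapply is_derive_ext; try eassumption; intros t; simpl; now rewrite E.
Qed.

Lemma CD_eq f s a b : CD f s a -> a = b -> CD f s b.
Proof. intros H ->; exact H. Qed.

Lemma CD_const c s : CD (fun _ => c) s 0.
Proof. split; simpl; auto_derive; auto; ring. Qed.

Lemma CD_id s : CD (fun t => RtoC t) s 1.
Proof. split; simpl; auto_derive; auto; ring. Qed.

Lemma CD_mult f g s a b : CD f s a -> CD g s b ->
  CD (fun t => f t * g t) s (a * g s + f s * b).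
Proof.
intros [H1 H2] [H3 H4].
set (F1 := fun t => Re (f t)) in *. set (F2 := fun t => Im (f t)) in *.
set (G1 := fun t => Re (g t)) in *. set (G2 := fun t => Im (g t)) in *.
split.
- change (@is_derive R_AbsRing R_NormedModule (fun t => F1 t * G1 t - F2 t * G2 t)%R s (Re (a * g s + f s * b))).
  auto_derive.
  + repeat split; eexists; eassumption.
  + replace (Derive (fun x:R => F1 x) s) with (Re a) by (symmetry; apply is_derive_unique; exact H1).
    replace (Derive (fun x:R => F2 x) s) with (Im a) by (symmetry; apply is_derive_unique; exact H2).
    replace (Derive (fun x:R => G1 x) s) with (Re b) by (symmetry; apply is_derive_unique; exact H3).
    replace (Derive (fun x:R => G2 x) s) with (Im b) by (symmetry; apply is_derive_unique; exact H4).
    unfold F1, F2, G1, G2; simpl; unfold Re, Im; match goal with |- ?u = ?v => change (@eq R u v) end; ring.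
- change (@is_derive R_AbsRing R_NormedModule (fun t => F1 t * G2 t + F2 t * G1 t)%R s (Im (a * g s + f s * b))).
  auto_derive.
  + repeat split; eexists; eassumption.
  + replace (Derive (fun x:R => F1 x) s) with (Re a) by (symmetry; apply is_derive_unique; exact H1).
    replace (Derive (fun x:R => F2 x) s) with (Im a) by (symmetry; apply is_derive_unique; exact H2).
    replace (Derive (fun x:R => G1 x) s) with (Re b) by (symmetry; apply is_derive_unique; exact H3).
    replace (Derive (fun x:R => G2 x) s) with (Im b) by (symmetry; apply is_derive_unique; exact H4).
    unfold F1, F2, G1, G2; simpl; unfold Re, Im; match goal with |- ?u = ?v => change (@eq R u v) end; ring.
Qed.

Ltac Ceq := unfold Re, Im; simpl; match goal with |- ?u = ?v => change (@eq R u v) end; ring.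

Lemma CD_plus f g s a b : CD f s a -> CD g s b ->
  CD (fun t => f t + g t) s (a + g s * 0 + b).
Proof.
intros [H1 H2] [H3 H4].
set (F1 := fun t => Re (f t)) in *. set (F2 := fun t => Im (f t)) in *.
set (G1 := fun t => Re (g t)) in *. set (G2 := fun t => Im (g t)) in *.
split.
- change (@is_derive R_AbsRing R_NormedModule (fun t => F1 t + G1 t)%R s (Re (a + g s * 0 + b))).
  auto_derive.
  + repeat split; eexists; eassumption.
  + replace (Derive (fun x:R => F1 x) s) with (Re a) by (symmetry; apply is_derive_unique; exact H1).
    replace (Derive (fun x:R => G1 x) s) with (Re b) by (symmetry; apply is_derive_unique; exact H3).
    Ceq.
- change (@is_derive R_AbsRing R_NormedModule (fun t => F2 t + G2 t)%R s (Im (a + g s * 0 + b))).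
  auto_derive.
  + repeat split; eexists; eassumption.
  + replace (Derive (fun x:R => F2 x) s) with (Im a) by (symmetry; apply is_derive_unique; exact H2).
    replace (Derive (fun x:R => G2 x) s) with (Im b) by (symmetry; apply is_derive_unique; exact H4).
    Ceq.
Qed.

Lemma CD_cexp f s a : CD f s a -> CD (fun t => cexp (f t)) s (a * cexp (f s)).
Proof.
intros [H1 H2].
set (F1 := fun t => Re (f t)) in *. set (F2 := fun t => Im (f t)) in *.
unfold cexp; split.
- change (@is_derive R_AbsRing R_NormedModule (fun t => exp (F1 t) * cos (F2 t) - 0 * sin (F2 t))%R s
     (Re (a * (exp (Re (f s)) * (cos (Im (f s)), sin (Im (f s))))))).
  auto_derive.
  + repeat split; eexists; eassumption.
  + replace (Derive (fun x:R => F1 x) s) with (Re a) by (symmetry; apply is_derive_unique; exact H1).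
    replace (Derive (fun x:R => F2 x) s) with (Im a) by (symmetry; apply is_derive_unique; exact H2).
    unfold F1, F2; Ceq.
- change (@is_derive R_AbsRing R_NormedModule (fun t => exp (F1 t) * sin (F2 t) + 0 * cos (F2 t))%R s
     (Im (a * (exp (Re (f s)) * (cos (Im (f s)), sin (Im (f s))))))).
  auto_derive.
  + repeat split; eexists; eassumption.
  + replace (Derive (fun x:R => F1 x) s) with (Re a) by (symmetry; apply is_derive_unique; exact H1).
    replace (Derive (fun x:R => F2 x) s) with (Im a) by (symmetry; apply is_derive_unique; exact H2).
    unfold F1, F2; Ceq.
Qed.

Lemma CD_pow f s a n : CD f s a ->
  CD (fun t => Cpow (f t) (S n)) s (RtoC (INR (S n)) * Cpow (f s) n * a).
Proof.
intros H; induction n.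
- eapply CD_eq. eapply CD_ext; [|exact H]. intros t; simpl; ring.
  simpl. ring.
- eapply CD_eq. eapply CD_ext; [|eapply CD_mult; [exact H|exact IHn]].
  intros t; reflexivity.
  rewrite (S_INR (S n)), RtoC_plus, Cpow_S. match goal with |- ?u = ?v => change (@eq C u v) end. ring.
Qed.

Lemma CD_cont f s a : CD f s a ->
  continuous (fun t => Re (f t)) s /\ continuous (fun t => Im (f t)) s.
Proof.
intros [H1 H2]; split; apply (ex_derive_continuous (K:=R_AbsRing) (V:=R_NormedModule)); eexists; eassumption.
Qed.

Lemma is_RInt_CD (F f : R -> C) a b :
  (forall s, Rmin a b <= s <= Rmax a b -> CD F s (f s)) ->
  (forall s, Rmin a b <= s <= Rmax a b -> exists d, CD f s d) ->
  is_RInt f a b (F b - F a).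
Proof.
intros HF Hf.
apply is_RInt_ext with (f := fun t => (Re (f t), Im (f t))).
{ intros t _; destruct (f t); reflexivity. }
replace (F b - F a) with ((Re (F b) - Re (F a))%R, (Im (F b) - Im (F a))%R)
  by (destruct (F b), (F a); reflexivity).
apply is_RInt_fct_extend_pair.
- apply (is_RInt_derive (V:=R_CompleteNormedModule) (fun t => Re (F t)) (fun t => Re (f t))).
  + intros s Hs; exact (proj1 (HF s Hs)).
  + intros s Hs; destruct (Hf s Hs) as [d Hd]; exact (proj1 (CD_cont _ _ _ Hd)).
- apply (is_RInt_derive (V:=R_CompleteNormedModule) (fun t => Im (F t)) (fun t => Im (f t))).
  + intros s Hs; exact (proj2 (HF s Hs)).
  + intros s Hs; destruct (Hf s Hs) as [d Hd]; exact (proj2 (CD_cont _ _ _ Hd)).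
Qed.

Lemma is_RInt_Cmult c (f : R -> C) a b l : is_RInt f a b l -> is_RInt (fun t => c * f t) a b (c * l).
Proof.
intros H.
pose proof (is_RInt_fct_extend_fst _ _ _ _ H) as H1.
pose proof (is_RInt_fct_extend_snd _ _ _ _ H) as H2.
apply is_RInt_ext with (f := fun t => (Re (c * f t), Im (c * f t))).
{ intros t _; destruct (c * f t); reflexivity. }
replace (c * l) with (Re (c * l), Im (c * l)) by (destruct (c*l); reflexivity).
apply is_RInt_fct_extend_pair; simpl.
- apply (is_RInt_minus (V:=R_NormedModule) _ _ _ _ _ _ (is_RInt_scal _ _ _ (fst c) _ H1)
     (is_RInt_scal _ _ _ (snd c) _ H2)).
- apply (is_RInt_plus (V:=R_NormedModule) _ _ _ _ _ _ (is_RInt_scal _ _ _ (fst c) _ H2)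
     (is_RInt_scal _ _ _ (snd c) _ H1)).
Qed.

Lemma Cmod_le_sum (z : C) : Cmod z <= Rabs (Re z) + Rabs (Im z).
Proof.
destruct z as [u v].
replace ((u, v) : C) with (RtoC u + RtoC v * Ci) by (unfold RtoC, Ci; apply injective_projections; simpl; ring).
eapply Rle_trans; [apply Cmod_triangle|].
rewrite Cmod_mult, Cmod_Ci, !Cmod_R. simpl. replace (u + (v * 0 - 0 * 1))%R with u by ring. replace (0 + (v * 1 + 0 * 0))%R with v by ring. lra.
Qed.

Definition clamp (s : R) : R := Rmax 0 (Rmin 1 s).

Lemma clamp_in s : 0 <= s <= 1 -> clamp s = s.
Proof. intros H; unfold clamp. rewrite Rmin_right by lra. rewrite Rmax_right; lra. Qed.

Lemma clamp_range s : 0 <= clamp s <= 1.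
Proof. unfold clamp. unfold Rmax, Rmin. repeat destruct Rle_dec; lra. Qed.

Lemma unif_RInt (fN : nat -> R -> C) (f : R -> C) (IN : nat -> C) :
  (forall N, is_RInt (fN N) 0 1 (IN N)) ->
  (forall eps, 0 < eps -> exists N0, forall N s, (N0 <= N)%nat -> 0 <= s <= 1 -> Cmod (fN N s - f s) <= eps) ->
  exists I, is_RInt f 0 1 I /\
    (forall eps, 0 < eps -> exists N0, forall N, (N0 <= N)%nat -> Cmod (IN N - I) <= eps).
Proof.
intros HI Hu.
destruct (filterlim_RInt (V := C_R_CompleteNormedModule) (fun N t => fN N (clamp t)) 0 1 eventually eventually_filter
   (fun t => f (clamp t)) IN) as [I [HI1 HI2]].
- intros N. apply is_RInt_ext with (fN N); [|apply HI].
  intros t Ht. rewrite Rmin_left, Rmax_right in Ht by lra. rewrite clamp_in; [reflexivity|lra].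
- intros P [eps HP]. unfold filtermap.
  destruct (Hu (eps/2)%R) as [N0 HN0]. { destruct eps; simpl; lra. }
  exists N0; intros N HN; apply HP.
  intros t. pose proof (HN0 N (clamp t) HN (clamp_range t)) as Hb.
  set (z := fN N (clamp t) - f (clamp t)) in Hb.
  pose proof (Rmax_Cmod z) as Hm.
  assert (Hre : Rabs (Re z) < eps). { unfold Re. pose proof (Rmax_l (Rabs (fst z)) (Rabs (snd z))). destruct eps; simpl in *; lra. }
  assert (Him : Rabs (Im z) < eps). { unfold Im. pose proof (Rmax_r (Rabs (fst z)) (Rabs (snd z))). destruct eps; simpl in *; lra. }
  split; unfold z in Hre, Him; simpl in *; unfold AbsRing_ball, abs, minus, plus, opp; simpl; exact Hre || exact Him.
- exists I; split.
  + apply is_RInt_ext with (fun t => f (clamp t)); [|exact HI2].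
    intros t Ht. rewrite Rmin_left, Rmax_right in Ht by lra. rewrite clamp_in; [reflexivity|lra].
  + intros eps Heps.
    assert (He2 : 0 < eps / 2) by lra.
    destruct (HI1 (ball I (mkposreal _ He2)) (locally_ball _ _)) as [N0 HN0].
    exists N0; intros N HN. destruct (HN0 N HN) as [Ha Hb].
    eapply Rle_trans; [apply Cmod_le_sum|].
    simpl in Ha, Hb. unfold AbsRing_ball, abs, minus, plus, opp in Ha, Hb; simpl in Ha, Hb.
    destruct (IN N), I; simpl in *. unfold ball in Ha, Hb; simpl in Ha, Hb. unfold AbsRing_ball, abs, minus, plus, opp in Ha, Hb; simpl in Ha, Hb. lra.
Qed.


Ltac Cring := cbv beta; match goal with |- ?u = ?v => change (@eq C u v) end; ring.

Definition CDex f s := exists d, CD f s d.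
Lemma CDex_const c s : CDex (fun _ => c) s.
Proof. exists 0; apply CD_const. Qed.
Lemma CDex_id s : CDex (fun t => RtoC t) s.
Proof. exists 1; apply CD_id. Qed.
Lemma CDex_mult f g s : CDex f s -> CDex g s -> CDex (fun t => f t * g t) s.
Proof. intros [a Ha] [b Hb]; eexists; apply CD_mult; eassumption. Qed.
Lemma CDex_plus f g s : CDex f s -> CDex g s -> CDex (fun t => f t + g t) s.
Proof. intros [a Ha] [b Hb]; eexists; apply CD_plus; eassumption. Qed.
Lemma CDex_opp f s : CDex f s -> CDex (fun t => - f t) s.
Proof. intros H. apply (CDex_mult (fun _ => -1) f s) in H; [|apply CDex_const].
 destruct H as [d Hd]; exists d; eapply CD_ext; [|exact Hd]. intros t; Cring. Qed.
Lemma CDex_minus f g s : CDex f s -> CDex g s -> CDex (fun t => f t - g t) s.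
Proof. intros Hf Hg. apply (CDex_plus f (fun t => - g t)); auto. apply CDex_opp; auto. Qed.
Lemma CDex_div f c s : CDex f s -> CDex (fun t => f t / c) s.
Proof. intros H. apply (CDex_mult f (fun _ => / c)); auto. apply CDex_const. Qed.
Lemma CDex_cexp f s : CDex f s -> CDex (fun t => cexp (f t)) s.
Proof. intros [a Ha]; exists (a * cexp (f s)); apply CD_cexp; exact Ha. Qed.
Lemma CDex_pow f n s : CDex f s -> CDex (fun t => Cpow (f t) n) s.
Proof. intros [a Ha]; destruct n. - exists 0. eapply CD_ext; [|apply (CD_const 1)]. reflexivity.
 - exists (RtoC (INR (S n)) * Cpow (f s) n * a). apply CD_pow; exact Ha. Qed.

Ltac CDauto := repeat match goal with
 | |- CDex (fun _ => ?c) _ => apply CDex_const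
 | |- CDex (fun t => RtoC t) _ => apply CDex_id
 | |- CDex (fun t => @?f t * @?g t) _ => apply (CDex_mult f g)
 | |- CDex (fun t => @?f t + @?g t) _ => apply (CDex_plus f g)
 | |- CDex (fun t => @?f t - @?g t) _ => apply (CDex_minus f g)
 | |- CDex (fun t => - @?f t) _ => apply (CDex_opp f)
 | |- CDex (fun t => @?f t / ?c) _ => apply (CDex_div f c)
 | |- CDex (fun t => cexp (@?f t)) _ => apply (CDex_cexp f)
 | |- CDex (fun t => Cpow (@?f t) ?n) _ => apply (CDex_pow f n)
 end.

Lemma CD_scal_r f c s a : CD f s a -> CD (fun t => f t * c) s (a * c).
Proof. intros H. eapply CD_eq. apply (CD_mult f (fun _ => c)); [exact H| apply CD_const]. Cring. Qed.

Lemma CD_lin u s : CD (fun t => RtoC t * u) s u.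
Proof. eapply CD_eq. apply (CD_mult (fun t => RtoC t) (fun _ => u)); [apply CD_id|apply CD_const]. Cring. Qed.

Lemma CD_w u s : CD (fun t => (1 - RtoC t) * u) s (- u).
Proof.
eapply CD_eq. eapply CD_ext; [| apply (CD_plus (fun _ => u) (fun t => RtoC t * (- u)))].
intros t; Cring. apply CD_const. apply CD_lin. Cring.
Qed.

Lemma INR_C_nz n : RtoC (INR (S n)) <> 0.
Proof. intros H. apply RtoC_inj in H. pose proof (pos_INR n). rewrite S_INR in H. lra. Qed.

Lemma cfact_nz n : cfact n <> 0.
Proof. unfold cfact. intros H. apply RtoC_inj in H. apply (INR_fact_neq_0 n). exact H. Qed.

Lemma cfact_S n : cfact (S n) = RtoC (INR (S n)) * cfact n.
Proof. unfold cfact. rewrite fact_simpl, mult_INR, RtoC_mult. reflexivity. Qed.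

Lemma cfact_0 : cfact 0 = 1.
Proof. reflexivity. Qed.

Lemma cfact_1 : cfact 1 = 1.
Proof. reflexivity. Qed.

Definition P (n : nat) (w : C) : C := sum_n (fun k => Cpow w k / cfact k) n.

Lemma P_S n w : P (S n) w = P n w + Cpow w (S n) / cfact (S n).
Proof. unfold P. rewrite sum_Sn. reflexivity. Qed.

Lemma P_0 w : P 0 w = 1.
Proof. unfold P. rewrite sum_O. rewrite cfact_0. simpl. field. Qed.

Lemma CD_P w s d n : CD w s d -> CD (fun t => P (S n) (w t)) s (d * P n (w s)).
Proof.
intros Hw. induction n.
- eapply CD_eq. eapply CD_ext; [| apply (CD_plus (fun _ => 1) (fun t => w t * / cfact 1))].
  + intros t. rewrite P_S, P_0, cfact_1. simpl. field.
  + apply CD_const.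
  + apply CD_scal_r; exact Hw.
  + rewrite P_0, cfact_1. field.
- eapply CD_eq. eapply CD_ext; [| apply (CD_plus (fun t => P (S n) (w t)) (fun t => Cpow (w t) (S (S n)) * / cfact (S (S n))))].
  + intros t. rewrite (P_S (S n)). reflexivity.
  + exact IHn.
  + apply CD_scal_r. apply CD_pow. exact Hw.
  + rewrite (P_S n).
    rewrite (cfact_S (S n)). pose proof (INR_C_nz (S n)). pose proof (cfact_nz (S n)).
    unfold Cdiv. field. split; auto.
Qed.

Lemma P_zero n : P n 0 = 1.
Proof.
induction n. apply P_0. rewrite P_S, IHn. simpl. rewrite Cmult_0_l. unfold Cdiv. rewrite Cmult_0_l. Cring.
Qed.

Lemma cexp_0 : cexp 0 = 1.
Proof. unfold cexp. simpl. rewrite exp_0, cos_0, sin_0. apply injective_projections; simpl; ring. Qed.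

Lemma Rrem_int n u :
  is_RInt (fun s => u * Cpow ((1 - RtoC s) * u) n / cfact n * cexp (RtoC s * u)) 0 1 (Rrem n u).
Proof.
set (G := fun t => cexp (RtoC t * u) * P n ((1 - RtoC t) * u)).
replace (Rrem n u) with (G 1 - G 0).
2:{ unfold G. replace ((1 - RtoC 1) * u) with (RtoC 0) by Cring.
    replace (RtoC 0 * u) with (RtoC 0) by Cring.
    replace ((1 - RtoC 0) * u) with u by Cring.
    replace (RtoC 1 * u) with u by Cring.
    rewrite P_zero, cexp_0. unfold Rrem. fold (P n u). Cring. }
apply is_RInt_CD.
- intros s _. unfold G. destruct n as [|m].
  + eapply CD_eq. apply CD_mult. apply CD_cexp. apply CD_lin.
    eapply CD_ext; [|apply (CD_const 1)]. intros t; rewrite P_0; reflexivity.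
    cbv beta. rewrite P_0, cfact_0. simpl. field.
  + eapply CD_eq. apply CD_mult. apply CD_cexp. apply CD_lin. apply CD_P. apply CD_w.
    cbv beta. rewrite P_S. pose proof (cfact_nz (S m)). field. exact H.
- intros s _. fold (CDex (fun s => u * Cpow ((1 - RtoC s) * u) n / cfact n * cexp (RtoC s * u)) s). CDauto.
Qed.

Lemma norm_prod_C (z : C) :
  @norm R_AbsRing (prod_NormedModule R_AbsRing R_NormedModule R_NormedModule) z
  = Cmod z.
Proof.
change (sqrt (Rabs (fst z) ^ 2 + Rabs (snd z) ^ 2) = Cmod z).
unfold Cmod. rewrite !pow2_abs. reflexivity.
Qed.

Lemma Cmod_cexp z : Cmod (cexp z) = exp (Re z).
Proof.
unfold cexp. rewrite Cmod_mult, Cmod_R. rewrite Rabs_pos_eq by (left; apply exp_pos).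
unfold Cmod; simpl. rewrite <- (Rmult_1_r (exp (fst z))) at 2. f_equal.
transitivity (sqrt 1); [f_equal; pose proof (sin2_cos2 (Im z)) as E; unfold Rsqr in E; nra | apply sqrt_1].
Qed.

Lemma exp_le x y : x <= y -> exp x <= exp y.
Proof. intros H; destruct (Rle_lt_or_eq_dec _ _ H) as [H'|H']. left; apply exp_increasing; auto. rewrite H'; lra. Qed.

Lemma Rrem_bound n u :
  Cmod (Rrem n u) <= 2 * (Cmod u ^ (S n) * exp (Cmod u) / INR (fact n)).
Proof.
set (M := (Cmod u ^ (S n) * exp (Cmod u) / INR (fact n))%R).
assert (H : @norm R_AbsRing (prod_NormedModule R_AbsRing R_NormedModule R_NormedModule) (Rrem n u) <= M).
{ assert (HC: is_RInt (fun _ : R => M) 0 1 M).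
  { pose proof (is_RInt_const (V:=R_NormedModule) 0 1 M) as HC.
    assert (E : ((1 - 0) * M = M)%R) by ring.
    change (is_RInt (fun _ : R => M) 0 1 ((1 - 0) * M)%R) in HC. rewrite E in HC. exact HC. }
  eapply (norm_RInt_le _ (fun _ => M) 0 1). lra. 2: apply Rrem_int. 2: exact HC.
  intros s Hs. rewrite norm_prod_C.
  unfold Cdiv. rewrite !Cmod_mult, Cmod_pow, Cmod_mult, Cmod_cexp, Cmod_inv by apply cfact_nz.
  unfold cfact. rewrite Cmod_R, Rabs_pos_eq by (apply pos_INR).
  replace (Cmod (1 - RtoC s)) with (1 - s)%R.
  2:{ replace (1 - RtoC s) with (RtoC (1 - s)) by (unfold RtoC; apply injective_projections; simpl; ring).
      rewrite Cmod_R, Rabs_pos_eq; lra. }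
  unfold M. simpl pow. unfold Rdiv.
  assert (Hf : 0 < / INR (fact n)) by (apply Rinv_0_lt_compat, INR_fact_lt_0).
  assert (Hc : 0 <= Cmod u) by apply Cmod_ge_0.
  assert (He : exp (Re (RtoC s * u)) <= exp (Cmod u)).
  { apply exp_le. simpl. pose proof (re_le_Cmod u) as Hr. unfold Re in Hr.
    pose proof (Rle_abs (fst u)). pose proof (Rabs_pos (fst u)). nra. }
  assert (H1 : ((1 - s) * Cmod u) ^ n <= Cmod u ^ n) by (apply pow_incr; split; nra).
  assert (H2 : 0 <= ((1-s)*Cmod u)^n) by (apply pow_le; nra).
  assert (H3 : 0 <= exp (Re (s*u))) by (left; apply exp_pos).
  replace (Cmod u * ((1 - s) * Cmod u) ^ n * / INR (fact n) * exp (Re (s * u)))%R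
    with ((Cmod u * / INR (fact n)) * (((1 - s) * Cmod u) ^ n * exp (Re (s * u))))%R by ring.
  replace (Cmod u * Cmod u ^ n * exp (Cmod u) * / INR (fact n))%R
    with ((Cmod u * / INR (fact n)) * (Cmod u ^ n * exp (Cmod u)))%R by ring.
  apply Rmult_le_compat_l. nra. apply Rmult_le_compat; auto. }
rewrite norm_prod_C in H. pose proof (Cmod_ge_0 (Rrem n u)). fold M. lra.
Qed.


Ltac toC := match goal with |- ?u = ?v => change (@eq C u v) end.

Ltac genpow := repeat match goal with |- context [Cpow ?a ?k] => generalize (Cpow a k); intro end.

Lemma cexp_add a b : cexp (a + b) = cexp a * cexp b.
Proof.
unfold cexp. simpl. rewrite exp_plus, cos_plus, sin_plus.
apply injective_projections; Ceq.
Qed.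

Lemma is_RInt_sum (g : nat -> R -> C) (I : nat -> C) N :
  (forall n, is_RInt (g n) 0 1 (I n)) ->
  is_RInt (fun s => sum_n (fun n => g n s) N) 0 1 (sum_n I N).
Proof.
intros H. induction N.
- rewrite sum_O. eapply is_RInt_ext; [|apply H]. intros t _; rewrite sum_O; reflexivity.
- rewrite sum_Sn. eapply is_RInt_ext; [|apply (is_RInt_plus _ _ _ _ _ _ IHN (H (S N)))].
  intros t _. rewrite sum_Sn. reflexivity.
Qed.

Lemma Ccv_series (a : nat -> C) l :
  (forall eps, 0 < eps -> exists N0, forall N, (N0 <= N)%nat -> Cmod (sum_n a N - l) <= eps) ->
  is_series a l.
Proof.
intros H P [eps HP]. destruct (H (eps/2)%R) as [N0 HN0]. { destruct eps; simpl; lra. }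
exists N0. intros N HN. apply HP. apply C_NormedModule_mixin_compat1.
eapply Rle_lt_trans. apply (HN0 N HN). destruct eps; simpl; lra.
Qed.

Lemma geom_sum (q : C) N : (1 - q) * sum_n (fun n => Cpow q n) N = 1 - Cpow q (S N).
Proof.
induction N.
- rewrite sum_O. simpl. Cring.
- rewrite sum_Sn. change plus with Cplus. rewrite Cmult_plus_distr_l, IHN. simpl. Cring.
Qed.

Lemma sum_scal (c : C) (a : nat -> C) N : sum_n (fun n => c * a n) N = c * sum_n a N.
Proof.
induction N. rewrite !sum_O; reflexivity.
rewrite !sum_Sn, IHN. change plus with Cplus. Cring.
Qed.

Lemma rb a e ea m r d N eps : 0 <= a -> 0 <= e <= ea -> 0 <= m <= r -> r < 1 -> 1 - r <= d ->
  0 < eps -> r ^ N < eps / (a * ea / (1 - r) + 1) ->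
  a * e * m ^ (S N) / d <= eps.
Proof.
intros Ha He Hm Hr Hd Heps HN.
set (A := (a * ea / (1 - r))%R) in *.
assert (HA : 0 <= A). { unfold A. apply Rmult_le_pos. nra. left; apply Rinv_0_lt_compat; lra. }
assert (h1 : m ^ (S N) <= r ^ N).
{ simpl. assert (m ^ N <= r ^ N) by (apply pow_incr; lra). assert (0 <= m ^ N) by (apply pow_le; lra).
  assert (0 <= r^N) by (apply pow_le; lra). nra. }
assert (h2 : / d <= / (1 - r)) by (apply Rinv_le_contravar; lra).
assert (h3 : 0 <= m ^ S N) by (apply pow_le; lra).
assert (h4 : a * e * m ^ (S N) / d <= A * r ^ N).
{ unfold A, Rdiv. 
  apply Rle_trans with (a * ea * r ^ N * / (1 - r))%R; [|right; ring].
  assert (0 <= a * e) by nra.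
  apply Rmult_le_compat.
  - apply Rmult_le_pos; lra.
  - left; apply Rinv_0_lt_compat; lra.
  - apply Rmult_le_compat; try lra. apply Rmult_le_compat_l; lra.
  - exact h2. }
assert (h5 : A * r ^ N <= A * (eps / (A + 1))).
{ apply Rmult_le_compat_l; lra. }
assert (h6 : A * (eps / (A + 1)) <= eps).
{ unfold Rdiv. apply Rle_trans with (eps * (A * / (A + 1)))%R; [right; ring|].
  rewrite <- (Rmult_1_r eps) at 2. apply Rmult_le_compat_l; [lra|].
  apply Rmult_le_reg_r with (A + 1)%R; [lra|]. rewrite Rmult_assoc, Rinv_l by lra. lra. }
lra.
Qed.

Lemma exp_re_le z b : Cmod z <= b -> exp (Re z) <= exp b.
Proof.
intros H. apply exp_le. pose proof (re_le_Cmod z). pose proof (Rle_abs (Re z)). lra.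
Qed.

Lemma Cmod_sy (s : R) y : 0 <= s <= 1 -> Cmod (RtoC s * y) <= Cmod y.
Proof.
intros Hs. rewrite Cmod_mult, Cmod_R, Rabs_pos_eq by lra.
pose proof (Cmod_ge_0 y). nra.
Qed.

Lemma Cmod_1s (s : R) : 0 <= s <= 1 -> Cmod (1 - RtoC s) = (1 - s)%R.
Proof.
intros Hs. replace (1 - RtoC s) with (RtoC (1 - s)) by (unfold RtoC; apply injective_projections; simpl; ring).
rewrite Cmod_R, Rabs_pos_eq; lra.
Qed.

Lemma partB (x y : C) : Cmod (x * y) < 1 ->
  exists K, is_RInt (fun s => y * cexp (RtoC s * y) / (1 - x * ((1 - RtoC s) * y))) 0 1 K /\
    is_series (fun n => cfact n * Rrem n y * Cpow x n) K.
Proof.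
intros Hr.
set (q := fun s : R => x * ((1 - RtoC s) * y)).
assert (Hterm : forall n, is_RInt (fun s => y * Cpow (q s) n * cexp (RtoC s * y)) 0 1
                          (cfact n * Rrem n y * Cpow x n)).
{ intros n. pose proof (is_RInt_Cmult (cfact n * Cpow x n) _ _ _ _ (Rrem_int n y)) as H.
  replace (cfact n * Rrem n y * Cpow x n) with (cfact n * Cpow x n * Rrem n y) by Cring.
  eapply is_RInt_ext; [|exact H]. intros t _. unfold q. rewrite !Cpow_mult_l.
  pose proof (cfact_nz n). cbv beta. genpow. toC. field. exact H0. }
set (r := Cmod (x * y)).
assert (Hr0 : 0 <= r) by apply Cmod_ge_0.
assert (Hr2 : r < 1) by exact Hr.
assert (Hq : forall s, 0 <= s <= 1 -> Cmod (q s) <= r).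
{ intros s Hs. unfold q. replace (x * ((1 - RtoC s) * y)) with ((1 - RtoC s) * (x * y)) by Cring.
  rewrite Cmod_mult, Cmod_1s by exact Hs. fold r. nra. }
assert (Hd : forall s, 0 <= s <= 1 -> 1 - r <= Cmod (1 - q s)).
{ intros s Hs. pose proof (Cmod_triangle (1 - q s) (q s)). replace (1 - q s + q s) with (RtoC 1) in H by Cring.
  rewrite Cmod_1 in H. pose proof (Hq s Hs). lra. }
destruct (unif_RInt (fun N s => sum_n (fun n => y * Cpow (q s) n * cexp (RtoC s * y)) N)
   (fun s => y * cexp (RtoC s * y) / (1 - q s))
   (fun N => sum_n (fun n => cfact n * Rrem n y * Cpow x n) N)) as [K [HK1 HK2]].
- intros N. apply (is_RInt_sum (fun n s => y * Cpow (q s) n * cexp (RtoC s * y))). exact Hterm.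
- intros eps Heps.
  assert (Hr1 : Rabs r < 1) by (rewrite Rabs_pos_eq by exact Hr0; exact Hr).
  assert (Hpos : 0 < eps / (Cmod y * exp (Cmod y) / (1 - r) + 1)).
  { apply Rdiv_lt_0_compat; auto. assert (0 <= Cmod y * exp (Cmod y) / (1 - r)).
    apply Rmult_le_pos. apply Rmult_le_pos. apply Cmod_ge_0. left; apply exp_pos.
    left; apply Rinv_0_lt_compat; lra. lra. }
  destruct (pow_lt_1_zero r Hr1 _ Hpos) as [N0 HN0].
  exists N0. intros N s HN Hs.
  set (Q := q s). set (E := cexp (RtoC s * y)).
  assert (HQ1 : 1 - Q <> 0).
  { intros H0. pose proof (Hd s Hs) as H1. fold Q in H1. rewrite H0, Cmod_0 in H1. lra. }
  assert (HS : sum_n (fun n => Cpow Q n) N = (1 - Cpow Q (S N)) / (1 - Q)).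
  { rewrite <- geom_sum. generalize (sum_n (fun n => Cpow Q n) N) as S0. intros S0. toC. symmetry. field. exact HQ1. }
  replace (sum_n (fun n => y * Cpow Q n * E) N - y * E / (1 - Q))
    with (- (y * E * Cpow Q (S N) / (1 - Q))).
  2:{ replace (sum_n (fun n => y * Cpow Q n * E) N) with (y * E * sum_n (fun n => Cpow Q n) N).
      rewrite HS. genpow. toC. field. exact HQ1.
      rewrite <- sum_scal. apply sum_n_ext. intros n. Cring. }
  rewrite Cmod_opp, Cmod_div by exact HQ1. rewrite !Cmod_mult, Cmod_pow. unfold E. rewrite Cmod_cexp.
  apply rb with (ea := exp (Cmod y)) (r := r).
  + apply Cmod_ge_0.
  + split. left; apply exp_pos. apply exp_re_le, Cmod_sy, Hs.
  + split. apply Cmod_ge_0. apply Hq, Hs.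
  + lra.
  + apply Hd, Hs.
  + exact Heps.
  + specialize (HN0 N HN). rewrite Rabs_pos_eq in HN0 by (apply pow_le; lra). exact HN0.
- exists K. split.
  + eapply is_RInt_ext; [|exact HK1]. intros; reflexivity.
  + apply Ccv_series. exact HK2.
Qed.

Lemma scal_C (k : R) (z : C) :
  @scal R_AbsRing (prod_NormedModule R_AbsRing R_NormedModule R_NormedModule) k z = RtoC k * z.
Proof. destruct z as [a b]. apply injective_projections; simpl; change (k * a = k * a - 0 * b)%R || change (k * b = k * b + 0 * a)%R; ring. Qed.

Lemma opp_C (z : C) :
  @opp (prod_NormedModule R_AbsRing R_NormedModule R_NormedModule) z = - z.
Proof. destruct z as [a b]. reflexivity. Qed.

Lemma cexp_neg_mul y : cexp (- y) * cexp y = 1.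
Proof. rewrite <- cexp_add. replace (- y + y) with (RtoC 0) by Cring. apply cexp_0. Qed.

Lemma partB2 (x y : C) : Cmod (x * y) < 1 ->
  exists J, is_RInt (seg_integrand x y) 0 1 J /\
    is_series (fun n => cfact n * Rrem n y * Cpow x n) (cexp y * J).
Proof.
intros Hr. destruct (partB x y Hr) as [K [HK1 HK2]].
set (f := fun s : R => y * cexp (RtoC s * y) / (1 - x * ((1 - RtoC s) * y))) in HK1.
pose proof (is_RInt_swap _ _ _ _ HK1) as Hsw.
assert (H2 : is_RInt f (-1*0+1) (-1*1+1) (opp K)).
{ replace (-1*0+1)%R with 1%R by ring. replace (-1*1+1)%R with 0%R by ring. exact Hsw. }
pose proof (is_RInt_comp_lin f (-1) 1 0 1 (opp K) H2) as H3.
pose proof (is_RInt_Cmult (- cexp (- y)) _ _ _ _ H3) as H4.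
exists (cexp (- y) * K). split.
- assert (E : - cexp (- y) * opp K = cexp (- y) * K).
  { destruct K as [k1 k2]. apply injective_projections; simpl; unfold opp; simpl; change (@opp R_AbelianGroup k1) with (- k1)%R; change (@opp R_AbelianGroup k2) with (- k2)%R; Ceq. }
  rewrite E in H4.
  eapply is_RInt_ext; [|exact H4]. intros t _. cbv beta. rewrite scal_C. unfold f.
  replace (RtoC (-1 * t + 1)) with (1 - RtoC t) by (unfold RtoC; apply injective_projections; simpl; ring).
  replace ((1 - (1 - RtoC t)) * y) with (RtoC t * y) by Cring.
  replace (cexp ((1 - RtoC t) * y)) with (cexp y * cexp (-(RtoC t * y))) by (rewrite <- cexp_add; f_equal; Cring).
  unfold seg_integrand. replace (RtoC (-1)) with (- RtoC 1) by (unfold RtoC; apply injective_projections; simpl; ring).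
  pose proof (cexp_neg_mul y) as Hc.
  set (a := cexp (- y)) in *. set (b := cexp y) in *.
  unfold Cdiv.
  replace (- a * (- RtoC 1 * (y * (b * cexp (- (RtoC t * y))) * / (1 - x * (RtoC t * y)))))
    with ((a * b) * (y * cexp (- (RtoC t * y)) * / (1 - x * (RtoC t * y)))) by Cring.
  rewrite Hc. Cring.
- replace (cexp y * (cexp (- y) * K)) with K; [exact HK2|].
  rewrite Cmult_assoc, (Cmult_comm (cexp y)), cexp_neg_mul, Cmult_1_l. reflexivity.
Qed.


Lemma cv_const c : Un_cv (fun _ => c) c.
Proof. intros eps H. exists 0%nat. intros n _. rewrite R_dist_eq. exact H. Qed.

Lemma decay (u v : nat -> R) r : 0 <= r < 1 -> (forall n, 0 <= u n) ->
  (forall n, u (S n) <= r * u n + v (S n)) -> Un_cv v 0 -> Un_cv u 0.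
Proof.
intros Hr Hu Hrec Hv eps Heps.
assert (He : 0 < eps * (1 - r) / 2) by (apply Rdiv_lt_0_compat; [apply Rmult_lt_0_compat|]; lra).
destruct (Hv _ He) as [N1 HN1].
assert (Hk : forall k, u (N1 + k)%nat <= r ^ k * u N1 + eps / 2).
{ induction k.
  - rewrite Nat.add_0_r. simpl. lra.
  - rewrite Nat.add_succ_r. eapply Rle_trans; [apply Hrec|].
    assert (v (S (N1 + k)) < eps * (1 - r) / 2).
    { specialize (HN1 (S (N1 + k)) ltac:(lia)). unfold R_dist in HN1. rewrite Rminus_0_r in HN1.
      pose proof (Rle_abs (v (S (N1 + k)))). lra. }
    simpl pow. nra. }
assert (Hr1 : Rabs r < 1) by (rewrite Rabs_pos_eq; lra).
assert (He2 : 0 < eps / 2 / (u N1 + 1)).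
{ apply Rdiv_lt_0_compat. lra. pose proof (Hu N1). lra. }
destruct (pow_lt_1_zero r Hr1 _ He2) as [K HK].
exists (N1 + K)%nat. intros n Hn. unfold R_dist. rewrite Rminus_0_r, Rabs_pos_eq by apply Hu.
replace n with (N1 + (n - N1))%nat by lia.
eapply Rle_lt_trans; [apply Hk|].
specialize (HK (n - N1)%nat ltac:(lia)). rewrite Rabs_pos_eq in HK by (apply pow_le; lra).
pose proof (Hu N1).
assert (r ^ (n - N1) * u N1 < eps / 2).
{ apply Rle_lt_trans with (r ^ (n - N1) * (u N1 + 1))%R.
  - pose proof (pow_le r (n - N1) (proj1 Hr)). nra.
  - apply Rmult_lt_reg_r with (/ (u N1 + 1))%R. apply Rinv_0_lt_compat; lra.
    rewrite Rmult_assoc, Rinv_r by lra. rewrite Rmult_1_r. exact HK. }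
lra.
Qed.

Definition cc (x : C) (n : nat) : C :=
  sum_n (fun j => Cpow (RtoC (-1)) j / cfact j * Cpow x (n - j)) n.

Lemma cc_0 x : cc x 0 = 1.
Proof. unfold cc. rewrite sum_O. simpl. rewrite cfact_0. toC. field. Qed.

Lemma cc_S x n : cc x (S n) = x * cc x n + Cpow (RtoC (-1)) (S n) / cfact (S n).
Proof.
unfold cc. rewrite sum_Sn. change plus with Cplus. rewrite Nat.sub_diag.
f_equal.
- rewrite <- sum_scal. apply sum_n_ext_loc. intros j Hj.
  replace (S n - j)%nat with (S (n - j)) by lia. rewrite Cpow_S. Cring.
- simpl. Cring.
Qed.

Lemma derangement_cc n x : derangement_poly n x = cfact n * cc x n.
Proof. reflexivity. Qed.

Lemma key x t N : (1 - x * t) * sum_n (fun n => cc x n * Cpow t n) N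
   = P N (- t) - x * cc x N * Cpow t (S N).
Proof.
induction N.
- rewrite sum_O, cc_0, P_0. simpl. Cring.
- rewrite sum_Sn. change plus with Cplus. rewrite Cmult_plus_distr_l, IHN, P_S, cc_S.
  replace (- t) with (RtoC (-1) * t) by (unfold RtoC; apply injective_projections; simpl; ring).
  rewrite Cpow_mult_l. rewrite (Cpow_S t (S N)).
  pose proof (cfact_nz (S N)). genpow. toC. field. exact H.
Qed.

Lemma term_int x y n :
  is_RInt (fun s => y * (cc x n * Cpow (RtoC s * y) n)) 0 1 (cc x n * Cpow y (S n) / RtoC (INR (S n))).
Proof.
set (F := fun t : R => cc x n * Cpow (RtoC t * y) (S n) * / RtoC (INR (S n))).
replace (cc x n * Cpow y (S n) / RtoC (INR (S n))) with (F 1 - F 0).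
2:{ unfold F. replace (RtoC 1 * y) with y by Cring. replace (RtoC 0 * y) with (RtoC 0) by Cring.
    rewrite (Cpow_S (RtoC 0)), Cmult_0_l. genpow. unfold Cdiv. toC. ring. }
apply is_RInt_CD.
- intros s _. unfold F. eapply CD_eq. apply CD_scal_r. apply CD_mult. apply CD_const. apply CD_pow. apply CD_lin.
  pose proof (INR_C_nz n). cbv beta. genpow. revert H. generalize (RtoC (INR (S n))) (cc x n). intros. toC. field. exact H.
- intros s _. fold (CDex (fun s => y * (cc x n * Cpow (RtoC s * y) n)) s). CDauto.
Qed.

Lemma pw_bound x y s N : Cmod (x * y) < 1 -> 0 <= s <= 1 ->
  Cmod (sum_n (fun n => y * (cc x n * Cpow (RtoC s * y) n)) N - seg_integrand x y s)
  <= Cmod y / (1 - Cmod (x * y)) *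
     (2 * Cmod y * exp (Cmod y) * (Cmod y ^ N / INR (fact N)) + Cmod (x * y) * (Cmod (cc x N) * Cmod y ^ N)).
Proof.
intros Hr Hs.
set (t := RtoC s * y). set (D := 1 - x * t).
set (a := Cmod y). set (r := Cmod (x * y)).
assert (Ha : 0 <= a) by apply Cmod_ge_0.
assert (Hr0 : 0 <= r) by apply Cmod_ge_0.
assert (Hr1 : r < 1) by exact Hr.
assert (Hm : Cmod t <= a) by (apply Cmod_sy; exact Hs).
assert (Hxt : Cmod (x * t) <= r).
{ unfold t, r. replace (x * (RtoC s * y)) with (RtoC s * (x * y)) by Cring. apply Cmod_sy; exact Hs. }
assert (Hd : 1 - r <= Cmod D).
{ pose proof (Cmod_triangle D (x * t)) as H. unfold D in H at 1. replace (1 - x * t + x * t) with (RtoC 1) in H by Cring.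
  rewrite Cmod_1 in H. lra. }
assert (HD : D <> 0).
{ intros H0. rewrite H0, Cmod_0 in Hd. lra. }
assert (Hsum : sum_n (fun n => y * (cc x n * Cpow t n)) N
   = y * (P N (- t) - x * cc x N * Cpow t (S N)) / D).
{ rewrite sum_scal. rewrite <- key. fold D. generalize (sum_n (fun n => cc x n * Cpow t n) N). intros S0.
  symmetry. toC. field. exact HD. }
rewrite Hsum. unfold seg_integrand. fold t. fold D.
replace (y * (P N (- t) - x * cc x N * Cpow t (S N)) / D - y * cexp (- t) / D)
  with (y * (- Rrem N (- t) - x * cc x N * Cpow t (S N)) / D).
2:{ unfold Rrem. fold (P N (- t)). generalize (P N (- t)). intros p. genpow. toC. field. exact HD. }
rewrite Cmod_div by exact HD. rewrite Cmod_mult.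
pose proof (Cmod_triangle (- Rrem N (- t)) (- (x * cc x N * Cpow t (S N)))) as Ht.
replace (- Rrem N (- t) + - (x * cc x N * Cpow t (S N))) with (- Rrem N (- t) - x * cc x N * Cpow t (S N)) in Ht by Cring.
rewrite !Cmod_opp, !Cmod_mult, Cmod_pow in Ht.
pose proof (Rrem_bound N (- t)) as HR. rewrite Cmod_opp in HR.
fold a.
set (C0 := Cmod (cc x N)). set (X := Cmod x). set (m := Cmod t).
assert (HrX : r = (X * a)%R) by (unfold r, X, a; apply Cmod_mult).
assert (HC0 : 0 <= C0) by apply Cmod_ge_0.
assert (HX : 0 <= X) by apply Cmod_ge_0.
assert (Hm0 : 0 <= m) by apply Cmod_ge_0.
assert (Hf : 0 < INR (fact N)) by apply INR_fact_lt_0.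
set (num := Cmod (- Rrem N (- t) - x * cc x N * Cpow t (S N))) in *.
assert (Hnum : num <= 2 * a * exp a * (a ^ N / INR (fact N)) + r * (C0 * a ^ N)).
{ assert (Hm' : m <= a) by exact Hm.
  assert (HR' : Cmod (Rrem N (- t)) <= 2 * (m ^ S N * exp m / INR (fact N))) by exact HR.
  assert (Ht' : num <= Cmod (Rrem N (-t)) + X * C0 * m ^ S N) by exact Ht.
  clear Hm HR Ht.
  assert (hp : m ^ S N <= a ^ S N) by (apply pow_incr; lra).
  assert (he : exp m <= exp a) by (apply exp_le; lra).
  assert (hpa : 0 <= a ^ N) by (apply pow_le; lra).
  assert (hpm : 0 <= m ^ S N) by (apply pow_le; lra).
  assert (h1 : m ^ S N * exp m / INR (fact N) <= a * a ^ N * exp a / INR (fact N)).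
  { unfold Rdiv. apply Rmult_le_compat_r. left; apply Rinv_0_lt_compat; lra.
    replace (a * a ^ N)%R with (a ^ S N)%R by reflexivity.
    apply Rmult_le_compat; try lra. left; apply exp_pos. }
  assert (h2 : X * C0 * m ^ S N <= r * (C0 * a ^ N)).
  { rewrite HrX. replace (X * a * (C0 * a ^ N))%R with (X * C0 * (a * a ^ N))%R by ring.
    apply Rmult_le_compat_l. nra. exact hp. }
  replace (2 * a * exp a * (a ^ N / INR (fact N)))%R with (2 * (a * a ^ N * exp a / INR (fact N)))%R
    by (unfold Rdiv; ring).
  lra. }
assert (Hn0 : 0 <= num) by apply Cmod_ge_0.
set (BB := (2 * a * exp a * (a ^ N / INR (fact N)) + r * (C0 * a ^ N))%R) in *.
replace (a * num / Cmod D)%R with (a * (num * / Cmod D))%R by (unfold Rdiv; ring).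
replace (a / (1 - r) * BB)%R with (a * (BB * / (1 - r)))%R by (unfold Rdiv; ring).
apply Rmult_le_compat_l; [exact Ha|].
apply Rmult_le_compat; [exact Hn0| left; apply Rinv_0_lt_compat; lra | exact Hnum |].
apply Rinv_le_contravar; lra.
Qed.

Lemma Cmod_m1_pow k : Cmod (Cpow (RtoC (-1)) k) = 1.
Proof. rewrite Cmod_pow, Cmod_R. replace (Rabs (-1)) with 1%R. apply pow1.
rewrite Rabs_left by lra. ring. Qed.

Lemma Cmod_cfact k : Cmod (cfact k) = INR (fact k).
Proof. unfold cfact. rewrite Cmod_R. apply Rabs_pos_eq, pos_INR. Qed.

Lemma partC x y J : Cmod (x * y) < 1 -> is_RInt (seg_integrand x y) 0 1 J ->
  is_series (fun n => derangement_poly n x * (Cpow y (S n) / cfact (S n))) J.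
Proof.
intros Hr HJ.
set (a := Cmod y). set (r := Cmod (x * y)).
assert (Ha : 0 <= a) by apply Cmod_ge_0.
assert (Hr0 : 0 <= r) by apply Cmod_ge_0.
assert (Hr1 : r < 1) by exact Hr.
set (v := fun n => (a ^ n / INR (fact n))%R).
set (u := fun N => (Cmod (cc x N) * a ^ N)%R).
assert (Hv : Un_cv v 0) by apply cv_speed_pow_fact.
assert (Hu : Un_cv u 0).
{ apply (decay u v r). lra. intros n; unfold u. apply Rmult_le_pos. apply Cmod_ge_0. apply pow_le; lra.
  intros n. unfold u, v. rewrite cc_S.
  pose proof (Cmod_triangle (x * cc x n) (Cpow (RtoC (-1)) (S n) / cfact (S n))) as H.
  rewrite Cmod_mult, Cmod_div, Cmod_m1_pow, Cmod_cfact in H by apply cfact_nz.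
  assert (HrX : r = (Cmod x * a)%R) by (unfold r, a; apply Cmod_mult).
  assert (0 <= a ^ S n) by (apply pow_le; lra).
  apply Rle_trans with ((Cmod x * Cmod (cc x n) + 1 / INR (fact (S n))) * a ^ S n)%R.
  apply Rmult_le_compat_r; assumption.
  rewrite HrX. simpl pow. unfold Rdiv. right; ring. exact Hv. }
set (B := fun N => (a / (1 - r) * (2 * a * exp a * v N + r * u N))%R).
assert (HB : Un_cv B 0).
{ replace 0%R with (a / (1 - r) * (2 * a * exp a * 0 + r * 0))%R by ring.
  apply CV_mult. apply cv_const. apply CV_plus; apply CV_mult; auto; apply cv_const. }
destruct (unif_RInt (fun N s => sum_n (fun n => y * (cc x n * Cpow (RtoC s * y) n)) N)
   (seg_integrand x y)
   (fun N => sum_n (fun n => cc x n * Cpow y (S n) / RtoC (INR (S n))) N)) as [I [HI1 HI2]].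
- intros N. apply (is_RInt_sum (fun n s => y * (cc x n * Cpow (RtoC s * y) n))). intros n; apply term_int.
- intros eps Heps. destruct (HB eps Heps) as [N0 HN0]. exists N0. intros N s HN Hs.
  eapply Rle_trans. apply pw_bound; assumption.
  specialize (HN0 N HN). unfold R_dist in HN0. rewrite Rminus_0_r in HN0.
  pose proof (Rle_abs (B N)). unfold B, v, u in *. fold a r. lra.
- assert (E : I = J).
  { rewrite <- (is_RInt_unique (V:=C_R_CompleteNormedModule) _ _ _ _ HI1).
    apply (is_RInt_unique (V:=C_R_CompleteNormedModule) _ _ _ _ HJ). }
  subst I. apply Ccv_series. intros eps Heps. destruct (HI2 eps Heps) as [N0 HN0].
  exists N0. intros N HN. specialize (HN0 N HN).
  replace (sum_n (fun n => derangement_poly n x * (Cpow y (S n) / cfact (S n))) N)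
    with (sum_n (fun n => cc x n * Cpow y (S n) / RtoC (INR (S n))) N). exact HN0.
  apply sum_n_ext. intros n. rewrite derangement_cc, cfact_S.
  pose proof (cfact_nz n). pose proof (INR_C_nz n). revert H H0.
  generalize (RtoC (INR (S n))) (cfact n) (cc x n) (Cpow y (S n)). intros. toC. field. auto.
Qed.


Theorem mainTheorem12 (x y : C) :
  Cmod (x * y) < 1 ->
  exists J : C,
    is_RInt (seg_integrand x y) 0 1 J /\
    is_series (fun n : nat => cfact n * Rrem n y * Cpow x n) (cexp y * J) /\
    is_series (fun n : nat => derangement_poly n x * (Cpow y (S n) / cfact (S n))) J.
Proof.
intros Hr. destruct (partB2 x y Hr) as [J [H1 H2]].
exists J. split; [exact H1|split; [exact H2|]]. apply partC; assumption.
Qed.
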